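(* Let $\mathcal Y$ be a finite set, let $R$ be a probability measure on $\mathcal Y$ with $r(y)=R(\{y\})>0$ for all $y$, and let $p,q:\mathcal Y\to(0,\infty)$ be the densities with respect to $R$ of probability measures $P,Q$ on $\mathcal Y$. For $\gamma\notin\{0,-1\}$ define $$D_\gamma(P,Q;R)=-\frac1\gamma\frac{\sum_{y} p(y)q(y)^\gamma r(y)}{\big(\sum_y q(y)^{\gamma+1}r(y)\big)^{\gamma/(\gamma+1)}}+\frac1\gamma\Big(\sum_y p(y)^{\gamma+1}r(y)\Big)^{1/(\gamma+1)},$$ and define the GM-divergence $$D_{\rm GM}(P,Q;R)=\Big(\sum_y\frac{p(y)}{q(y)}r(y)\Big)\exp\Big\{\sum_y r(y)\log q(y)\Big\}-\exp\Big\{\sum_y r(y)\log p(y)\Big\}.$$ Then $\lim_{\gamma\to-1}D_\gamma(P,Q;R)=D_{\rm GM}(P,Q;R)$. *)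

(* Defs.v *)
From HB Require Import structures.
From mathcomp Require Import all_boot all_order all_algebra.
From mathcomp Require Import all_classical all_reals all_analysis.
Set Implicit Arguments. Unset Strict Implicit. Unset Printing Implicit Defensive.
Import Order.TTheory GRing.Theory Num.Theory.
Import numFieldNormedType.Exports.
Local Open Scope ring_scope.

Definition Dgamma (Y : finType) (R : realType) (r p q : Y -> R) (g : R) : R :=
  - g^-1 * ((\sum_y p y * q y `^ g * r y)
             / (\sum_y q y `^ (g + 1) * r y) `^ (g / (g + 1)))
  + g^-1 * (\sum_y p y `^ (g + 1) * r y) `^ ((g + 1)^-1).

Definition DGM (Y : finType) (R : realType) (r p q : Y -> R) : R :=
  (\sum_y p y / q y * r y) * expR (\sum_y r y * ln (q y))
  - expR (\sum_y r y * ln (p y)).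

(* Main.v *)
Require Import Defs.
From HB Require Import structures.
From mathcomp Require Import all_boot all_order all_algebra.
From mathcomp Require Import all_classical all_reals all_analysis.
Import Order.TTheory GRing.Theory Num.Theory.
Import numFieldNormedType.Exports.
Local Open Scope classical_set_scope.
Local Open Scope ring_scope.

Lemma dnbhs_shift (R : realType) (a l : R) (f : R -> R) :
  (fun h => f (h + a)) @ 0^' --> l -> f @ a^' --> l.
Proof.
move=> H P /H H0.
have H1 : \forall h \near 0, h != 0 -> P (f (h + a)) := H0.
suff : \forall x \near a, x != a -> P (f x) by [].
rewrite (near_shift 0 a); apply: filterS H1 => z /= Hz.
rewrite subr0 => za; apply: Hz.
by apply: contra za => /eqP ->; rewrite add0r.
Qed.

Lemma is_derive_sumexp (Y : finType) (R : realType) (c b : Y -> R) (x : R) :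
  is_derive x 1 (fun t => \sum_y c y * expR (t * b y))
    (\sum_y c y * (b y * expR (x * b y))).
Proof.
rewrite /index_enum; elim: (Finite.enum Y) => [|y s IH].
  rewrite big_nil.
  have -> : (fun t : R => \sum_(y <- [::]) c y * expR (t * b y)) = cst 0.
    by apply: funext => t; rewrite big_nil.
  exact: is_derive_cst.
have -> : (fun t : R => \sum_(z <- y :: s) c z * expR (t * b z)) =
  (fun t => c y * expR (t * b y)) + (fun t => \sum_(z <- s) c z * expR (t * b z)).
  by apply: funext => t; rewrite big_cons.
rewrite big_cons; apply: is_deriveD => //.
apply: is_deriveZ.
have -> : (b y * expR (x * b y)) = expR (x * b y) * (b y).
  by rewrite mulrC.
apply: (@is_derive1_comp _ expR (fun t => t * b y)).
have D := @is_deriveM _ _ id (cst (b y)) x 1 1 0 (is_derive_id _ _) (is_derive_cst _ _ _).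
apply: (is_derive_eq D).
by rewrite /= scaler0 add0r /GRing.scale /= mulr1.
Qed.

Lemma powR_pos (R : realType) (a x : R) : 0 < a -> a `^ x = expR (x * ln a).
Proof. by move=> a0; rewrite /powR gt_eqF. Qed.

Lemma key (Y : finType) (R : realType) (r a : Y -> R)
  (hr1 : \sum_y r y = 1) (ha : forall y, 0 < a y) :
  (fun g => (g + 1)^-1 * ln (\sum_y a y `^ (g + 1) * r y)) @ (-1 : R)^'
    --> \sum_y r y * ln (a y).
Proof.
apply: dnbhs_shift.
set S := fun t : R => \sum_y r y * expR (t * ln (a y)).
have S0 : S 0 = 1 by rewrite /S -hr1; apply: eq_bigr => y _; rewrite mul0r expR0 mulr1.
have DS := @is_derive_sumexp _ _ r (fun y => ln (a y)) 0.
have DG := is_derive1_comp (is_derive1_ln (x := S 0) ltac:(by rewrite S0)) DS.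
have C : (fun h : R => h^-1 *: (((@ln R \o S) \o shift 0) (h *: 1) - (@ln R \o S) 0)) @ 0^'
   --> 'D_1 (@ln R \o S) 0 := @ex_derive _ _ _ _ _ _ _ DG.
rewrite (@derive_val _ _ _ _ _ _ _ DG) S0 invr1 mul1r in C.
have Ec : \sum_y r y * (ln (a y) * expR (0 * ln (a y))) = \sum_y r y * ln (a y).
  by apply: eq_bigr => y _; rewrite mul0r expR0 mulr1.
rewrite Ec in C.
apply: cvg_trans C; apply: near_eq_cvg; near=> h.
rewrite /= S0 ln1 subr0 addr0 addrNK /GRing.scale /= mulr1; congr (_ * ln _).
by rewrite /S; apply: eq_bigr => y _; rewrite powR_pos // mulrC.
Unshelve. all: by end_near. Qed.

Lemma sum_pos (Y : finType) (R : realType) (r f : Y -> R)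
  (hr1 : \sum_y r y = 1) (hf : forall y, 0 < f y) : 0 < \sum_y f y.
Proof.
case: (pickP Y) => [y0 _ | H0].
  rewrite (bigD1 y0) //=; apply: (lt_le_trans (hf y0)); rewrite lerDl.
  by apply: sumr_ge0 => y _; apply: ltW.
by move: hr1; rewrite big_pred0 // => /esym/eqP; rewrite oner_eq0.
Qed.

Theorem mainTheorem3 (Y : finType) (R : realType) (r p q : Y -> R)
  (hr : forall y, 0 < r y) (hr1 : \sum_y r y = 1)
  (hp : forall y, 0 < p y) (hp1 : \sum_y p y * r y = 1)
  (hq : forall y, 0 < q y) (hq1 : \sum_y q y * r y = 1) :
  Dgamma r p q g @[g --> (-1 : R)^'] --> DGM r p q.
Proof.
set Lq := fun g : R => (g + 1)^-1 * ln (\sum_y q y `^ (g + 1) * r y).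
set Lp := fun g : R => (g + 1)^-1 * ln (\sum_y p y `^ (g + 1) * r y).
set N := fun g : R => \sum_y (p y * r y) * expR (g * ln (q y)).
have Kq : Lq @ (-1 : R)^' --> \sum_y r y * ln (q y) := @key _ _ r q hr1 hq.
have Kp : Lp @ (-1 : R)^' --> \sum_y r y * ln (p y) := @key _ _ r p hr1 hp.
have Kid : (fun g : R => g) @ (-1 : R)^' --> (-1 : R) := @nbhs_dnbhs _ (-1 : R).
have KN : N @ (-1 : R)^' --> N (-1).
  have H1 := cvg_app N (@nbhs_dnbhs _ (-1 : R)). apply: cvg_trans H1 _.
  apply: differentiable_continuous; apply/derivable1_diffP.
  exact: (@ex_derive _ _ _ _ _ _ _ (@is_derive_sumexp _ _ (fun y => p y * r y) (fun y => ln (q y)) (-1))).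
have KV : (fun g : R => g^-1) @ (-1 : R)^' --> (-1 : R)^-1.
  by apply: cvgV => //; rewrite oppr_eq0 oner_eq0.
have KE1 : (fun g => expR (- (g * Lq g))) @ (-1 : R)^' --> expR (- ((-1) * \sum_y r y * ln (q y))).
  apply: (continuous_cvg _ _ (f := fun g => - (g * Lq g))); first exact: continuous_expR.
  by apply: cvgN; apply: cvgM.
have KE2 : (fun g => expR (Lp g)) @ (-1 : R)^' --> expR (\sum_y r y * ln (p y)).
  by apply: (continuous_cvg _ _ (f := Lp)); first exact: continuous_expR.
set E := fun g : R => - (g^-1 * (N g * expR (- (g * Lq g)))) + g^-1 * expR (Lp g).
have KE : E @ (-1 : R)^' --> - ((-1)^-1 * (N (-1) * expR (- ((-1) * \sum_y r y * ln (q y)))))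
    + (-1)^-1 * expR (\sum_y r y * ln (p y)).
  by apply: cvgD; [apply: cvgN; apply: cvgM => //; apply: cvgM | apply: cvgM].
have -> : DGM r p q = - ((-1)^-1 * (N (-1) * expR (- ((-1) * \sum_y r y * ln (q y)))))
    + (-1)^-1 * expR (\sum_y r y * ln (p y)).
  rewrite /DGM invrN1 !mulNr !mul1r !opprK; congr (_ * _ - _).
  rewrite /N; apply: eq_bigr => y _.
  by rewrite mulNr mul1r expRN lnK ?posrE // mulrAC.
have -> : Dgamma r p q = E.
  apply: funext => g.
  have Sq : 0 < \sum_y q y `^ (g + 1) * r y.
    by apply: (@sum_pos _ _ r _ hr1) => y; apply: mulr_gt0 => //; apply: powR_gt0.
  have Sp : 0 < \sum_y p y `^ (g + 1) * r y.
    by apply: (@sum_pos _ _ r _ hr1) => y; apply: mulr_gt0 => //; apply: powR_gt0.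
  rewrite /Dgamma /E /Lq /Lp (@powR_pos _ _ _ Sq) (@powR_pos _ _ _ Sp) mulNr.
  congr (- (_ * (_ * _)) + _).
    by rewrite /N; apply: eq_bigr => y _; rewrite powR_pos // mulrAC.
  by rewrite -expRN mulrA.
exact: KE.
Qed.
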